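(* Let $B$ be the $3\times 2$ integer matrix of rank two \[ B = \begin{bmatrix} \phantom{-\lambda} r & \phantom{-\lambda} s \\ -\lambda r & -\lambda s \\ \phantom{-\lambda} a & \phantom{-\lambda} b \end{bmatrix} \] where $r, s, a, b$ are positive integers, $a \leq b$, $r \geq s$, $\gcd(r,s)=d$, and $0<\lambda = p/q$ in lowest terms (so that $q$ divides $r$ and $s$, since $\lambda r,\lambda s$ are integers), and set $M = \left[ \begin{smallmatrix} r/q & s/q \\ a & b \end{smallmatrix} \right]$. Given $\ell \in \mathbb{N}$, let $\phi_\ell : \mathbb{N}^2 \to \mathbb{Z}^3$ be the injective map $(w,k) \mapsto (qw, \lambda(q\ell - qw), k) = (qw, p(\ell - w), k)$. Then the image under $\phi_\ell$ of the band graph $G_\ell(M)$ is the slice graph $G_{S(q\ell)}(B)$.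
   Context: Notation: $\mathbb{N}=\{0,1,2,\dots\}$. For a subset $Q\subseteq \mathbb{Z}^n$ and an $n\times m$ integer matrix $M$, $G_Q(M)$ is the graph whose vertices are the elements of $Q$, with two vertices $u,v\in Q$ joined by an edge if and only if $u-v$ or $v-u$ is a column of $M$. For a rank two $2\times 2$ integer matrix $M$ with all entries positive and $\ell\in\mathbb{N}$, the band graph is $G_\ell(M) = G_{Q_\ell}(M)$ with $Q_\ell = \{u \in \mathbb{N}^2 \mid u_1 \leq \ell\}$. For $B$ as in the claim and $\ell$, the slice $S(\ell)$ is $\mathbb{N}^3 \cap \{(u_x,u_y,u_z) \mid u_y = -\lambda u_x + \lambda \ell\}$, and $G_{S(\ell)}(B)$ is the $\ell$th slice graph of $B$. The image $\phi_\ell(\{(w,k)\in\mathbb{N}^2 \mid 0\le w\le \ell\})$ is exactly the intersection with $\mathbb{N}^3$ of the hyperplane $u_y=-\lambda u_x+\lambda q\ell$. *)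

(* Defs.v *)
From HB Require Import structures.
From mathcomp Require Import all_boot all_order all_algebra.
Set Implicit Arguments. Unset Strict Implicit. Unset Printing Implicit Defensive.
Import Order.TTheory GRing.Theory Num.Theory.
Local Open Scope ring_scope.

Definition adj n m (M : 'M[int]_(n, m)) (u v : 'cV[int]_n) : bool :=
  [exists j : 'I_m, (u - v == col j M) || (v - u == col j M)].

(* The graph G_Q(M) is given by the vertex predicate Q and the matrix M;
   its edges are the pairs {u,v} of vertices of Q with adj M u v.
   [graph_image f Q M Q' M'] says that the image under f of G_Q(M)
   (vertices f(Q), edges f(u)f(v) for edges uv) equals G_{Q'}(M'). *)
Definition graph_image n m n' m' (f : 'cV[int]_n -> 'cV[int]_n')
  (Q : 'cV[int]_n -> Prop) (M : 'M[int]_(n, m))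
  (Q' : 'cV[int]_n' -> Prop) (M' : 'M[int]_(n', m')) : Prop :=
  (forall x, Q' x <-> exists2 u, Q u & f u = x) /\
  (forall x y, Q' x -> Q' y ->
     (adj M' x y <-> exists u v, [/\ Q u, Q v, f u = x, f v = y & adj M u v])).

Definition inN n (u : 'cV[int]_n) : Prop := forall i, 0 <= u i 0.

Definition band (l : nat) (u : 'cV[int]_2) : Prop :=
  inN u /\ u 0 0 <= l%:Z.

Definition slice (p q : nat) (t : nat) (u : 'cV[int]_3) : Prop :=
  inN u /\
  ((u 1 0)%:~R : rat) = - (p%:R / q%:R) * (u 0 0)%:~R + (p%:R / q%:R) * t%:R.

(* The matrix B = [[r, s]; [-lambda r, -lambda s]; [a, b]] with lambda = p/q
   (the entries lambda r, lambda s are integers by hypothesis). *)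
Definition Bmat (r s a b p q : nat) : 'M[int]_(3, 2) :=
  \matrix_(i < 3, j < 2)
    if i == 0 :> nat then (if j == 0 :> nat then r%:Z else s%:Z)
    else if i == 1 :> nat then (if j == 0 :> nat then - ((p * r) %/ q)%:Z
                                                else - ((p * s) %/ q)%:Z)
    else (if j == 0 :> nat then a%:Z else b%:Z).

Definition Mmat (r s a b q : nat) : 'M[int]_2 :=
  \matrix_(i < 2, j < 2)
    if i == 0 :> nat then (if j == 0 :> nat then (r %/ q)%:Z else (s %/ q)%:Z)
    else (if j == 0 :> nat then a%:Z else b%:Z).

Definition phi (p q l : nat) (u : 'cV[int]_2) : 'cV[int]_3 :=
  \col_(i < 3)
    if i == 0 :> nat then q%:Z * u 0 0
    else if i == 1 :> nat then p%:Z * (l%:Z - u 0 0)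
    else u 1 0.

(* Main.v *)
Require Import Defs.
From HB Require Import structures.
From mathcomp Require Import all_boot all_order all_algebra zify ring lra.
Import Order.TTheory GRing.Theory Num.Theory.
Local Open Scope ring_scope.

Lemma cV3P (x y : 'cV[int]_3) :
  x = y <-> [/\ x 0 0 = y 0 0, x 1 0 = y 1 0 & x 2%:R 0 = y 2%:R 0].
Proof.
split; first by move=> ->.
case=> h0 h1 h2; apply/matrixP => i j; rewrite ord1.
case: i => [[|[|[|//]]]] Hi.
- by have -> : Ordinal Hi = 0 by apply: val_inj.
- by have -> : Ordinal Hi = 1 by apply: val_inj.
- by have -> : Ordinal Hi = 2%:R by apply: val_inj.
Qed.

Lemma cV2P (x y : 'cV[int]_2) :
  x = y <-> x 0 0 = y 0 0 /\ x 1 0 = y 1 0.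
Proof.
split; first by move=> ->.
case=> h0 h1; apply/matrixP => i j; rewrite ord1.
case: i => [[|[|//]]] Hi.
- by have -> : Ordinal Hi = 0 by apply: val_inj.
- by have -> : Ordinal Hi = 1 by apply: val_inj.
Qed.

Lemma adj_phi r' s' a b p q l (u v : 'cV[int]_2) : (0 < q)%N ->
  adj (Bmat (r' * q) (s' * q) a b p q) (phi p q l u) (phi p q l v) =
  adj (Mmat (r' * q) (s' * q) a b q) u v.
Proof.
move=> q0.
rewrite /adj /Bmat /Mmat /phi !mulnA !mulnK //.
apply/existsP/existsP => -[j Hj]; exists j; move: Hj.
all: case/orP => /eqP; rewrite ?cV3P ?cV2P !mxE /= ?mxE /=.
all: case: j => [[|[|//]]] Hj /=.
all: case => *; apply/orP; first [
  by left; apply/eqP; rewrite ?cV3P ?cV2P !mxE /= ?mxE /=; split; nia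
| by right; apply/eqP; rewrite ?cV3P ?cV2P !mxE /= ?mxE /=; split; nia ].
Qed.

Lemma vert p q l x : (0 < p)%N -> (0 < q)%N -> coprime p q ->
  slice p q (q * l) x <-> exists2 u, band l u & phi p q l u = x.
Proof.
move=> p0 q0 cpq.
have qn0 : (q%:R : rat) != 0 by rewrite pnatr_eq0 -lt0n.
split.
- case=> hN heq.
  have h0 := hN 0; have h1 := hN 1; have h2 := hN 2%:R.
  case E0: (x 0 0) h0 heq => [X0|//] _ heq.
  case E1: (x 1 0) h1 heq => [X1|//] _ heq.
  case E2: (x 2%:R 0) h2 => [X2|//] _.
  have Hz : (q%:Z * X1%:Z + p%:Z * X0%:Z) = (p * q * l)%N%:Z.
    apply: (@intr_inj rat).
    rewrite !rmorphD !rmorphM /= heq.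
    by rewrite -!pmulrn !natrM; field.
  have Hn : (q * X1 + p * X0 = p * q * l)%N by apply/eqP; rewrite -eqz_nat PoszD !PoszM Hz.
  have : (q %| p * X0)%N.
    by rewrite -(dvdn_addr _ (dvdn_mulr X1 (dvdnn q))) Hn mulnC mulnA dvdn_mull.
  rewrite Gauss_dvdr; last by rewrite coprime_sym.
  case/dvdnP => w Ew.
  exists (\col_(i < 2) if i == 0 :> nat then w%:Z else X2%:Z).
    split.
      move=> i; rewrite mxE; case: ifP => _ //.
    rewrite mxE /=; nia.
  apply/cV3P; rewrite !mxE /= E0 E1 E2; split; nia.
- case=> u [hN hl] <-.
  split.
    move=> i; rewrite mxE; case: i => [[|[|[|//]]]] Hi /=.
    + by have := hN 0; nia.
    + by have := hN 0; nia.
    + by apply: hN.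
  rewrite !mxE /=.
  rewrite !(intrM, intrB) -!pmulrn natrM; field; exact: qn0.
Qed.

Theorem lemma4p5 (r s a b p q : nat) (l : nat) :
  (0 < r)%N -> (0 < s)%N -> (0 < a)%N -> (0 < b)%N ->
  (a <= b)%N -> (s <= r)%N ->
  (0 < p)%N -> (0 < q)%N -> coprime p q ->
  (q %| p * r)%N -> (q %| p * s)%N ->
  \rank (map_mx (fun x : int => x%:~R : rat) (Bmat r s a b p q)) = 2%N ->
  graph_image (phi p q l) (band l) (Mmat r s a b q)
              (slice p q (q * l)) (Bmat r s a b p q).
Proof.
move=> _ _ _ _ _ _ p0 q0 cpq Hr Hs _.
have cqp : coprime q p by rewrite coprime_sym.
move: Hr; rewrite Gauss_dvdr // => /dvdnP [r' ->].
move: Hs; rewrite Gauss_dvdr // => /dvdnP [s' ->].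
split; first by move=> x; apply: vert.
move=> x y Hx Hy.
have [u bu <-] := (@vert p q l x p0 q0 cpq).1 Hx.
have [v bv <-] := (@vert p q l y p0 q0 cpq).1 Hy.
rewrite adj_phi //; split.
  by move=> H; exists u, v; split.
case=> u' [v' [_ _ Hu Hv H]].
move: H; rewrite -(adj_phi r' s' a b p q l) // Hu Hv.
by rewrite adj_phi.
Qed.
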